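(* Let $\mathcal E$ be a completely positive trace-preserving map on $M_d$, and let $L\ge1$ be an integer. Regard $\mathcal E^L$ as a linear operator on the $d^2$-dimensional space $M_d$, with trace $\mathrm{Tr}(\mathcal E^L)$; equivalently, this is $\mathrm{Tr}(E^L)$ for the $d^2\times d^2$ transfer matrix $E$ representing $\mathcal E$. Then $$1-d^{5/2}\tau(\mathcal E)^L\le\mathrm{Tr}(\mathcal E^L)\le 1+d^{5/2}\tau(\mathcal E)^L.$$
   Context: $M_d$ is the space of complex $d\times d$ matrices. The ergodicity coefficient is $\tau(\mathcal F):=\sup\{\|\mathcal F(\sigma)\|_1/\|\sigma\|_1:\ 0\ne\sigma\in M_d,\ \mathrm{Tr}\,\sigma=0\}$, where $\|\cdot\|_1$ is the trace norm. *)

(* Defs.v *)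
From HB Require Import structures.
From mathcomp Require Import all_boot all_order all_algebra.
Set Implicit Arguments. Unset Strict Implicit. Unset Printing Implicit Defensive.
Import Order.TTheory GRing.Theory Num.Theory.
Local Open Scope ring_scope.

Definition adjmx (C : numClosedFieldType) m n (A : 'M[C]_(m, n)) : 'M[C]_(n, m) :=
  (map_mx Num.conj A)^T.

Definition psdmx (C : numClosedFieldType) n (A : 'M[C]_n) : Prop :=
  forall v : 'rV[C]_n, 0 <= (v *m A *m adjmx v) 0 0.

(* trace norm ||A||_1 = Tr sqrt(A^* A) = sum of the square roots of the
   eigenvalues of the Hermitian matrix A^* A (spectral decomposition). *)
Definition trnorm (C : numClosedFieldType) n (A : 'M[C]_n) : C :=
  \sum_(i < n) sqrtC (spectral_diag (adjmx A *m A) 0 i).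

(* The k*d x k*d matrix  sum_{i,j} E_ij (x) Xb i j  (block matrix with blocks Xb i j) *)
Definition blockmx (C : numClosedFieldType) k d (Xb : 'I_k -> 'I_k -> 'M[C]_d)
  : 'M[C]_(k * d) :=
  \sum_(i < k) \sum_(j < k) \sum_(a < d) \sum_(b < d)
     Xb i j a b *: delta_mx (mxvec_index i a) (mxvec_index j b).

(* complete positivity: id_k (x) f maps PSD matrices on C^k (x) C^d to PSD ones, for all k *)
Definition completely_positive (C : numClosedFieldType) d
  (f : 'M[C]_d -> 'M[C]_d) : Prop :=
  forall (k : nat) (Xb : 'I_k -> 'I_k -> 'M[C]_d),
    psdmx (blockmx Xb) -> psdmx (blockmx (fun i j => f (Xb i j))).

Definition trace_preserving (C : numClosedFieldType) d
  (f : 'M[C]_d -> 'M[C]_d) : Prop :=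
  forall X : 'M[C]_d, \tr (f X) = \tr X.

Definition ergo_ratios (C : numClosedFieldType) d (f : 'M[C]_d -> 'M[C]_d) (r : C) : Prop :=
  exists s : 'M[C]_d, s != 0 /\ \tr s = 0 /\ r = trnorm (f s) / trnorm s.

(* t is the ergodicity coefficient tau(f): the supremum of ergo_ratios f,
   taken in the nonnegative reals (so the empty supremum, d = 1, is 0). *)
Definition is_ergodicity_coeff (C : numClosedFieldType) d (f : 'M[C]_d -> 'M[C]_d) (t : C)
  : Prop :=
  0 <= t /\ (forall r, ergo_ratios f r -> r <= t) /\
  (forall u, 0 <= u -> (forall r, ergo_ratios f r -> r <= u) -> t <= u).

(* Main.v *)
Require Import Defs.
From HB Require Import structures.
From mathcomp Require Import all_boot all_order all_algebra.
From mathcomp Require Import ring.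
Import Order.TTheory GRing.Theory Num.Theory.
Set Implicit Arguments. Unset Strict Implicit. Unset Printing Implicit Defensive.
Local Open Scope ring_scope.

Section Adj.
Variable C : numClosedFieldType.

Lemma adjmxE m n (A : 'M[C]_(m,n)) : adjmx A = (A ^t Num.conj)%sesqui.
Proof. by rewrite /adjmx map_trmx. Qed.

Lemma adjmxM m n p (A : 'M[C]_(m,n)) (B : 'M[C]_(n,p)) :
  adjmx (A *m B) = adjmx B *m adjmx A.
Proof. by rewrite /adjmx map_mxM trmx_mul. Qed.

Lemma adjmxK m n (A : 'M[C]_(m,n)) : adjmx (adjmx A) = A.
Proof. by apply/matrixP=> i j; rewrite !mxE conjCK. Qed.

Lemma adjmxD m n (A B : 'M[C]_(m,n)) : adjmx (A + B) = adjmx A + adjmx B.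
Proof. by apply/matrixP=> i j; rewrite !mxE rmorphD. Qed.

Lemma adjmxZ m n c (A : 'M[C]_(m,n)) : adjmx (c *: A) = c^* *: adjmx A.
Proof. by apply/matrixP=> i j; rewrite !mxE rmorphM. Qed.

Lemma adjmx_delta m n (i : 'I_m) (j : 'I_n) : adjmx (delta_mx i j : 'M[C]_(m,n)) = delta_mx j i.
Proof. by apply/matrixP=> a b; rewrite !mxE rmorph_nat andbC. Qed.

Lemma adjmxE' m n (A : 'M[C]_(m,n)) i j : adjmx A i j = (A j i)^*.
Proof. by rewrite /adjmx !mxE. Qed.

Lemma quadE n (v : 'rV[C]_n) (w : 'rV[C]_n) (A : 'M[C]_n) :
  (v *m A *m adjmx w) 0 0 = \sum_p \sum_q v 0 p * A p q * (w 0 q)^*.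
Proof.
rewrite mxE exchange_big /=; apply: eq_bigr => q _.
by rewrite !mxE mulr_suml; apply: eq_bigr => p _; rewrite ?mxE.
Qed.

Lemma quad_ge0 m n (y : 'M[C]_(m,n)) (w : 'rV[C]_n) :
  0 <= (w *m (adjmx y *m y) *m adjmx w) 0 0.
Proof.
have e : w *m adjmx y = adjmx (y *m adjmx w) by rewrite adjmxM adjmxK.
rewrite mulmxA -mulmxA e.
set z := y *m adjmx w.
rewrite mxE; apply: sumr_ge0 => k _; rewrite /adjmx !mxE mulrC.
exact: mul_conjC_ge0.
Qed.

Lemma spec_facts n (y : 'M[C]_n) :
  (forall i, 0 <= spectral_diag (adjmx y *m y) 0 i) /\
  \sum_i spectral_diag (adjmx y *m y) 0 i = \tr (adjmx y *m y).
Proof.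
set A := adjmx y *m y.
have AA : adjmx A = A by rewrite /A adjmxM adjmxK.
have Anorm : A \is normalmx by apply/normalmxP; rewrite -adjmxE AA.
have /orthomx_spectralP := Anorm.
set P := spectralmx A; set s := spectral_diag A => eA.
have Pu : P \in unitmx by exact: spectral_unit.
have eD : diag_mx s = P *m A *m invmx P.
  by rewrite eA !mulmxA mulmxV // mul1mx -mulmxA mulmxV // mulmx1.
split.
  move=> i; have -> : s 0 i = diag_mx s i i by rewrite mxE eqxx mulr1n.
  rewrite eD invmx_unitary ?spectral_unitarymx // -adjmxE.
  have := quad_ge0 y (row i P); rewrite !quadE.
  rewrite /A mxE; under eq_bigr do rewrite !mxE.
  rewrite exchange_big /=.
  congr (0 <= _); apply: eq_bigr => j _; rewrite [in RHS]mxE mulr_suml; apply: eq_bigr => p _.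
  by rewrite /adjmx !mxE.
by rewrite -mxtrace_diag eD mxtrace_mulC mulmxA mulVmx // mul1mx.
Qed.

End Adj.
Section Norm.
Variable C : numClosedFieldType.

Definition frob n (y : 'M[C]_n) := \sum_a \sum_b `|y a b| ^+ 2.

Lemma frob_ge0 n (y : 'M[C]_n) : 0 <= frob y.
Proof. by apply: sumr_ge0 => a _; apply: sumr_ge0 => b _; rewrite exprn_ge0. Qed.

Lemma tr_adj n (y : 'M[C]_n) : \tr (adjmx y *m y) = frob y.
Proof.
rewrite /mxtrace /frob exchange_big /=; apply: eq_bigr => b _.
by rewrite mxE; apply: eq_bigr => a _; rewrite /adjmx !mxE normCKC.
Qed.

Lemma sq_sum_le (I : Type) (r : seq I) (x : I -> C) :
  (forall i, 0 <= x i) -> \sum_(i <- r) x i ^+ 2 <= (\sum_(i <- r) x i) ^+ 2.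
Proof.
move=> x0; elim: r => [|a r IH]; first by rewrite !big_nil expr0n.
rewrite !big_cons sqrrD -addrA lerD2l.
have S0 : 0 <= \sum_(i <- r) x i by apply: sumr_ge0.
apply: le_trans IH _; rewrite lerDr.
by rewrite mulrn_wge0 // mulr_ge0.
Qed.

Lemma cauchy_schwarz n (x : 'I_n -> C) : (forall i, 0 <= x i) ->
  (\sum_i x i) ^+ 2 <= n%:R * \sum_i x i ^+ 2.
Proof.
move=> x0.
have H : 0 <= \sum_i \sum_j (x i - x j) ^+ 2.
  apply: sumr_ge0 => i _; apply: sumr_ge0 => j _.
  by rewrite -realEsqr rpredB // ger0_real.
have E : \sum_i \sum_j (x i - x j) ^+ 2 =
   (n%:R * \sum_i x i ^+ 2) *+ 2 - ((\sum_i x i) ^+ 2) *+ 2.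
  under eq_bigr do under eq_bigr do rewrite sqrrB.
  under eq_bigr => i _.
    rewrite big_split /= sumrB sumr_const card_ord sumrMnl -mulr_sumr.
  over.
  rewrite big_split /= sumrB sumr_const card_ord !sumrMnl -mulr_suml.
  by rewrite mulr_natl expr2 addrAC -mulr2n.
move: H; rewrite E subr_ge0 => H.
by rewrite -(ler_pMn2r (n:=2)).
Qed.

Definition sv n (y : 'M[C]_n) i := spectral_diag (adjmx y *m y) 0 i.

Lemma trnormE n (y : 'M[C]_n) : trnorm y = \sum_i sqrtC (sv y i).
Proof. by []. Qed.

Lemma trnorm_ge0 n (y : 'M[C]_n) : 0 <= trnorm y.
Proof.
apply: sumr_ge0 => i _; rewrite sqrtC_ge0.
by have [H _] := spec_facts y; apply: H.
Qed.

Lemma frob_le_trnorm n (y : 'M[C]_n) : frob y <= trnorm y ^+ 2.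
Proof.
have [H1 H2] := spec_facts y.
rewrite -tr_adj -H2 trnormE.
have -> : \sum_i spectral_diag (adjmx y *m y) 0 i = \sum_i sqrtC (sv y i) ^+ 2.
  by apply: eq_bigr => i _; rewrite sqrtCK.
by apply: sq_sum_le; move=> i; rewrite sqrtC_ge0; apply: H1.
Qed.

Lemma entry_le_trnorm n (y : 'M[C]_n) a b : `|y a b| <= trnorm y.
Proof.
have e1 : `|y a b| ^+ 2 <= frob y.
  rewrite /frob (bigD1 a) //= (bigD1 b) //= -addrA lerDl.
  apply: addr_ge0; first by apply: sumr_ge0 => ? _; rewrite exprn_ge0.
  by apply: sumr_ge0 => ? _; apply: sumr_ge0 => ? _; rewrite exprn_ge0.
have e2 := le_trans e1 (frob_le_trnorm y).
rewrite -(sqrCK (normr_ge0 (y a b))) -(sqrCK (trnorm_ge0 y)).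
by rewrite ler_sqrtC // qualifE /= exprn_ge0 // trnorm_ge0.
Qed.

Lemma trnorm_le n (y : 'M[C]_n) : trnorm y <= sqrtC (n%:R * frob y).
Proof.
have [H1 H2] := spec_facts y.
rewrite -(sqrCK (trnorm_ge0 y)) ler_sqrtC; last first.
- by rewrite qualifE /= mulr_ge0 ?ler0n ?frob_ge0.
- by rewrite qualifE /= exprn_ge0 // trnorm_ge0.
rewrite trnormE -tr_adj -H2.
have -> : \sum_i spectral_diag (adjmx y *m y) 0 i = \sum_i sqrtC (sv y i) ^+ 2.
  by apply: eq_bigr => i _; rewrite sqrtCK.
by apply: cauchy_schwarz; move=> i; rewrite sqrtC_ge0; apply: H1.
Qed.

Lemma trnorm_gt0 n (y : 'M[C]_n) : y != 0 -> 0 < trnorm y.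
Proof.
move=> ny; rewrite lt_def trnorm_ge0 andbT.
apply/eqP => t0.
have := frob_le_trnorm y; rewrite t0 expr0n /= => fle.
have f0 : frob y = 0 by apply/eqP; rewrite eq_le fle frob_ge0.
move/eqP: ny; apply; apply/matrixP => a b; rewrite mxE.
apply/eqP; rewrite -normr_eq0 -sqrf_eq0.
rewrite eq_le exprn_ge0 // andbT.
rewrite -f0 /frob (bigD1 a) //= (bigD1 b) //= -addrA lerDl.
apply: addr_ge0; first by apply: sumr_ge0 => ? _; rewrite exprn_ge0.
by apply: sumr_ge0 => ? _; apply: sumr_ge0 => ? _; rewrite exprn_ge0.
Qed.

Lemma trnorm0 n : trnorm (0 : 'M[C]_n) = 0.
Proof.
apply/eqP; rewrite eq_le trnorm_ge0 andbT.
apply: le_trans (trnorm_le _) _.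
have -> : frob (0 : 'M[C]_n) = 0.
  by rewrite /frob big1 // => a _; rewrite big1 // => b _; rewrite mxE normr0 expr0n.
by rewrite mulr0 sqrtC0.
Qed.

End Norm.
Section Herm.
Variable C : numClosedFieldType.

Definition qf n (v w : 'rV[C]_n) (A : 'M[C]_n) := (v *m A *m adjmx w) 0 0.

Lemma qf_sum n (v w : 'rV[C]_n) (I : Type) (r : seq I) (F : I -> 'M[C]_n) :
  qf v w (\sum_(i <- r) F i) = \sum_(i <- r) qf v w (F i).
Proof. by rewrite /qf mulmx_sumr mulmx_suml summxE. Qed.

Lemma qfZ n (v w : 'rV[C]_n) c A : qf v w (c *: A) = c * qf v w A.
Proof. by rewrite /qf -scalemxAr -scalemxAl mxE. Qed.

Lemma qf_delta n (v w : 'rV[C]_n) p q : qf v w (delta_mx p q) = v 0 p * (w 0 q)^*.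
Proof.
rewrite /qf quadE (bigD1 p) //= [X in _ + X]big1 ?addr0; last first.
  by move=> p' np'; apply: big1 => q' _; rewrite mxE (negbTE np') mulr0 mul0r.
rewrite (bigD1 q) //= big1 ?addr0; last first.
  by move=> q' nq'; rewrite mxE eqxx (negbTE nq') mulr0 mul0r.
by rewrite mxE !eqxx mulr1.
Qed.


Lemma qfDl n (v1 v2 w : 'rV[C]_n) A : qf (v1 + v2) w A = qf v1 w A + qf v2 w A.
Proof. by rewrite /qf !mulmxDl mxE. Qed.

Lemma qfDr n (v w1 w2 : 'rV[C]_n) A : qf v (w1 + w2) A = qf v w1 A + qf v w2 A.
Proof. by rewrite /qf adjmxD mulmxDr mxE. Qed.

Lemma qfZl n c (v w : 'rV[C]_n) A : qf (c *: v) w A = c * qf v w A.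
Proof. by rewrite /qf -!scalemxAl mxE. Qed.

Lemma qfZr n c (v w : 'rV[C]_n) A : qf v (c *: w) A = c^* * qf v w A.
Proof. by rewrite /qf adjmxZ -!scalemxAr mxE. Qed.

Lemma qf_e n (A : 'M[C]_n) x y : qf (delta_mx 0 x) (delta_mx 0 y) A = A x y.
Proof.
rewrite /qf quadE (bigD1 x) //= [X in _ + X]big1 ?addr0; last first.
  by move=> p' np'; apply: big1 => q' _; rewrite mxE (negbTE np') mul0r mul0r.
rewrite (bigD1 y) //= big1 ?addr0; last first.
  by move=> q' nq'; rewrite [delta_mx 0 y 0 q']mxE (negbTE nq') rmorph0 mulr0.
by rewrite !mxE !eqxx /= rmorph1; ring.
Qed.

Lemma block1_qf d (X : 'M[C]_d) (u : 'rV[C]_d) :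
  qf (mxvec u) (mxvec u) (blockmx (fun _ _ : 'I_1 => X)) = qf u u X.
Proof.
rewrite /blockmx ?big_ord1 qf_sum.
under eq_bigr do rewrite qf_sum.
under eq_bigr do under eq_bigr do rewrite qfZ qf_delta !mxvecE.
rewrite /qf quadE; apply: eq_bigr => a _; apply: eq_bigr => b _.
by rewrite mulrA [X a b * _]mulrC.
Qed.

Lemma psd_block1 d (X : 'M[C]_d) :
  psdmx (blockmx (fun _ _ : 'I_1 => X)) <-> psdmx X.
Proof.
split => H v.
  by have := block1_qf X v; rewrite /qf => <-; apply: H.
rewrite -(vec_mxK v); have := block1_qf X (vec_mx v); rewrite /qf => ->.
exact: H.
Qed.

Lemma psd_herm d (A : 'M[C]_d) : psdmx A -> adjmx A = A.
Proof.
move=> H.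
have R v : qf v v A \is Num.real by apply: ger0_real; apply: H.
have key a b : (A a b)^* = A b a.
  set ea := delta_mx 0 a : 'rV[C]_d; set eb := delta_mx 0 b : 'rV[C]_d.
  have h1 : A a b + A b a \is Num.real.
    have -> : A a b + A b a = qf (ea + eb) (ea + eb) A - qf ea ea A - qf eb eb A.
      by rewrite !qfDl !qfDr !qf_e; ring.
    by rewrite !rpredB.
  have h2 : 'i * (A b a - A a b) \is Num.real.
    have -> : 'i * (A b a - A a b) =
        qf (ea + 'i *: eb) (ea + 'i *: eb) A - qf ea ea A - qf eb eb A.
      rewrite !qfDl !qfDr !qfZl !qfZr !qf_e conjCi.
      have hi : 'i * (- 'i * A b b) = A b b :> C.
        by rewrite mulrA mulrN -expr2 sqrCi opprK mul1r.
      rewrite hi; ring.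
    by rewrite !rpredB.
  move: h1 h2; rewrite !CrealE => /eqP h1 /eqP h2.
  move: h1 h2; rewrite rmorphD rmorphM rmorphB /= conjCi => h1 h2.
  have h3 : (A a b)^* - (A b a)^* = A b a - A a b.
    apply: (mulfI (neq0Ci C)); rewrite -h2; ring.
  have e : (A a b)^* *+ 2 = A b a *+ 2.
    have -> : (A a b)^* *+ 2 = ((A a b)^* + (A b a)^*) + ((A a b)^* - (A b a)^*) by ring.
    by rewrite h1 h3; ring.
  move: e; rewrite -[X in X = _]mulr_natr -[X in _ = X]mulr_natr; apply: mulIf; by rewrite pnatr_eq0.
by apply/matrixP => a b; rewrite /adjmx !mxE key.
Qed.

End Herm.
Section HP.
Variable C : numClosedFieldType.
Variable d : nat.
Variable E : {linear 'M[C]_d -> 'M[C]_d}.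
Hypothesis E_cp : completely_positive E.

Lemma auxI (I D1 D2 D3 D4 : C) : I * I = -1 ->
  - I * (D1 + I * D2 + (- I * D3 + - I * (I * D4)) - D1 - D4) = D2 - D3.
Proof.
move=> h.
transitivity (- (I * I) * D2 + (I * I) * D3 + ((I * (I * I)) + I) * D4); first by ring.
by rewrite h; ring.
Qed.

Lemma aux2 (D2 D3 : C) : 2%:R^-1 * (D2 + D3 + (D2 - D3)) = D2.
Proof.
have -> : D2 + D3 + (D2 - D3) = 2%:R * D2 by ring.
by rewrite mulrA mulVf ?mul1r // pnatr_eq0.
Qed.

Lemma cp_psd X : psdmx X -> psdmx (E X).
Proof.
move=> H.
have H1 : psdmx (blockmx (fun _ _ : 'I_1 => X)) by apply/psd_block1.
by have := E_cp H1; move/psd_block1.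
Qed.

Definition SP (X : 'M[C]_d) := E (adjmx X) = adjmx (E X).

Lemma SP_psd X : psdmx X -> SP X.
Proof. by move=> H; rewrite /SP (psd_herm H) (psd_herm (cp_psd H)). Qed.

Lemma SP_add X Y : SP X -> SP Y -> SP (X + Y).
Proof. by rewrite /SP => hX hY; rewrite adjmxD !linearD /= hX hY adjmxD. Qed.

Lemma SP_scale c X : SP X -> SP (c *: X).
Proof. by rewrite /SP => hX; rewrite adjmxZ !linearZ /= hX adjmxZ. Qed.

Lemma SP_sub X Y : SP X -> SP Y -> SP (X - Y).
Proof. by move=> hX hY; apply: SP_add => //; rewrite -scaleN1r; apply: SP_scale. Qed.

Lemma SP_rank1 (w : 'rV[C]_d) : SP (adjmx w *m w).
Proof. by apply: SP_psd => v; apply: quad_ge0. Qed.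

Lemma SP_delta a b : SP (delta_mx a b).
Proof.
set ea := delta_mx 0 a : 'rV[C]_d; set eb := delta_mx 0 b : 'rV[C]_d.
have Haa : SP (delta_mx a a).
  by have := SP_rank1 ea; rewrite /ea adjmx_delta mul_delta_mx.
have Hbb : SP (delta_mx b b).
  by have := SP_rank1 eb; rewrite /eb adjmx_delta mul_delta_mx.
have H1 : SP (delta_mx a b + delta_mx b a).
  have := SP_rank1 (ea + eb).
  rewrite adjmxD /ea /eb !adjmx_delta mulmxDl !mulmxDr !mul_delta_mx => H.
  have := SP_sub (SP_sub H Haa) Hbb.
  have -> // : delta_mx a a + delta_mx a b + (delta_mx b a + delta_mx b b)
     - delta_mx a a - delta_mx b b = delta_mx a b + delta_mx b a :> 'M[C]_d.
  by apply/matrixP => x y; rewrite !mxE; ring.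
have H2 : SP (delta_mx a b - delta_mx b a).
  have := SP_rank1 (ea + 'i *: eb).
  rewrite adjmxD adjmxZ /ea /eb !adjmx_delta mulmxDl !mulmxDr.
  rewrite -!scalemxAl -!scalemxAr !mul_delta_mx conjCi => H.
  have := SP_scale (- 'i) (SP_sub (SP_sub H Haa) Hbb).
  have -> // : - 'i *: (delta_mx a a + 'i *: delta_mx a b +
     (- 'i *: delta_mx b a + - 'i *: ('i *: delta_mx b b))
     - delta_mx a a - delta_mx b b) = delta_mx a b - delta_mx b a :> 'M[C]_d.
  apply/matrixP => x y; rewrite !mxE.
  by apply: auxI; rewrite -expr2 sqrCi.
have := SP_scale (2%:R^-1) (SP_add H1 H2).
have -> // : 2%:R^-1 *: (delta_mx a b + delta_mx b a + (delta_mx a b - delta_mx b a))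
   = delta_mx a b :> 'M[C]_d.
apply/matrixP => x y; rewrite !mxE; exact: aux2.
Qed.

Lemma adjmx0 : adjmx (0 : 'M[C]_d) = 0.
Proof. by apply/matrixP => i j; rewrite /adjmx !mxE rmorph0. Qed.

Lemma herm_pres X : E (adjmx X) = adjmx (E X).
Proof.
rewrite [X]matrix_sum_delta.
apply: (big_ind SP).
- by rewrite /SP adjmx0 linear0 adjmx0.
- exact: SP_add.
move=> a _; apply: (big_ind SP).
- by rewrite /SP adjmx0 linear0 adjmx0.
- exact: SP_add.
by move=> b _; apply: SP_scale; apply: SP_delta.
Qed.

End HP.
Section Main.
Variable C : numClosedFieldType.
Variable d : nat.
Variable E : {linear 'M[C]_d -> 'M[C]_d}.

Definition F n (X : 'M[C]_d) := iter n E X.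

Lemma FD n X Y : F n (X + Y) = F n X + F n Y.
Proof. by elim: n => //= n IH; rewrite IH linearD. Qed.

Lemma FZ n c X : F n (c *: X) = c *: F n X.
Proof. by elim: n => //= n IH; rewrite IH linearZ. Qed.

Lemma FB n X Y : F n (X - Y) = F n X - F n Y.
Proof. by rewrite FD -scaleN1r FZ scaleN1r. Qed.

Lemma F_lin n u : mxvec u *m (lin_mx E ^+ n) = mxvec (F n u).
Proof.
elim: n u => [|n IH] u; first by rewrite expr0 mulmx1.
by rewrite exprS -mulmxE mulmxA mul_vec_lin IH /F iterSr.
Qed.

Lemma trace_formula L :
  \tr (lin_mx E ^+ L) = \sum_a \sum_b (F L (delta_mx a b)) a b.
Proof.
rewrite /mxtrace (reindex _ (curry_mxvec_bij _ _)) /= pair_bigA /=.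
apply: eq_bigr => [[a b]] _ /=.
by rewrite -[RHS]mxvecE -F_lin mxvec_delta -rowE mxE.
Qed.


Hypothesis d_gt0 : (0 < d)%N.
Hypothesis E_cp : completely_positive E.
Hypothesis E_tp : trace_preserving E.
Variable t : C.
Hypothesis t_tau : is_ergodicity_coeff E t.

Lemma dn0 : d%:R != 0 :> C.
Proof. by rewrite pnatr_eq0 -lt0n. Qed.

Lemma F_tr n X : \tr (F n X) = \tr X.
Proof. by elim: n => //= n IH; rewrite E_tp IH. Qed.

Lemma F_herm n X : F n (adjmx X) = adjmx (F n X).
Proof. by elim: n => //= n IH; rewrite /F /= -/(F n _) IH herm_pres. Qed.

Lemma tr_real L : (\tr (lin_mx E ^+ L))^* = \tr (lin_mx E ^+ L).
Proof.
rewrite trace_formula rmorph_sum /=.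
transitivity (\sum_a \sum_b (F L (delta_mx b a)) b a); last by rewrite exchange_big.
apply: eq_bigr => a _; rewrite rmorph_sum /=; apply: eq_bigr => b _.
by rewrite -adjmxE' -F_herm adjmx_delta.
Qed.

Lemma contr s : \tr s = 0 -> trnorm (E s) <= t * trnorm s.
Proof.
move=> ts; case: (eqVneq s 0) => [->|ns].
  by rewrite linear0 trnorm0 mulr0.
have pos := trnorm_gt0 ns.
have [t0 [tub _]] := t_tau.
have r := tub (trnorm (E s) / trnorm s) (ex_intro _ s (conj ns (conj ts erefl))).
by rewrite -ler_pdivrMr.
Qed.

Lemma t_ge0 : 0 <= t. Proof. by case: t_tau. Qed.

Lemma F_contr n s : \tr s = 0 -> trnorm (F n s) <= t ^+ n * trnorm s.
Proof.
move=> ts; elim: n => [|n IH]; first by rewrite expr0 mul1r.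
change (trnorm (E (F n s)) <= t ^+ n.+1 * trnorm s).
apply: le_trans (contr _) _; first by rewrite F_tr.
by rewrite exprS -mulrA ler_wpM2l // t_ge0.
Qed.

Definition Y a b : 'M[C]_d := delta_mx a b - ((a == b)%:R / d%:R) *: 1%:M.

Lemma tr_delta a b : \tr (delta_mx a b : 'M[C]_d) = (a == b)%:R.
Proof.
rewrite /mxtrace (bigD1 a) //= big1 ?addr0; first by rewrite mxE eqxx.
by move=> k nk; rewrite mxE (negbTE nk).
Qed.

Lemma trY a b : \tr (Y a b) = 0.
Proof.
by rewrite /Y linearB /= mxtraceZ mxtrace1 tr_delta divfK ?subrr // dn0.
Qed.

Lemma adjmx1 : adjmx (1%:M : 'M[C]_d) = 1%:M.
Proof. by apply/matrixP => i j; rewrite /adjmx !mxE rmorph_nat eq_sym. Qed.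

Lemma adjmxB (A B : 'M[C]_d) : adjmx (A - B) = adjmx A - adjmx B.
Proof. by apply/matrixP => i j; rewrite /adjmx !mxE rmorphB. Qed.

Lemma frobY a b : frob (Y a b) <= 1.
Proof.
rewrite -tr_adj.
set c := (a == b)%:R / d%:R : C.
have cc : c^* = c.
  by apply/eqP; rewrite -CrealE /c rpredM ?rpred_nat // rpredV rpred_nat.
have -> : adjmx (Y a b) *m Y a b =
   delta_mx b b - c *: delta_mx b a - c *: delta_mx a b + (c * c) *: 1%:M.
  rewrite /Y adjmxB adjmxZ cc adjmx_delta adjmx1 mulmxBl !mulmxBr mul_delta_mx.
  rewrite -!scalemxAl -!scalemxAr !mul1mx mulmx1 scalerA.
  by rewrite -/c opprB addrA addrAC.
rewrite !linearD /= !linearN /= !mxtraceZ !tr_delta mxtrace1 eqxx.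
rewrite /c -subr_ge0; clear cc c; case: (eqVneq a b) => [eab|nab]; first subst b.
  rewrite ?eqxx (_ : true%:R = 1 :> C) //; set u := d%:R^-1.
  have h : u * d%:R = 1 by rewrite /u mulVf // dn0.
  match goal with |- is_true (0 <= ?Z) => have -> : Z = u end.
    transitivity (2%:R * u - u * (u * d%:R)); first by ring.
    by rewrite h; ring.
  by rewrite /u invr_ge0 ler0n.
rewrite (_ : false%:R = 0 :> C) //.
rewrite (_ : true%:R = 1 :> C) //.
match goal with |- is_true (0 <= ?Z) => have -> : Z = 0 by ring end.
by [].
Qed.

Lemma entry_bound L a b : `|F L (Y a b) a b| <= t ^+ L * sqrtC d%:R.
Proof.
apply: le_trans (entry_le_trnorm _ a b) _.
apply: le_trans (F_contr L (trY a b)) _.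
rewrite ler_wpM2l ?exprn_ge0 ?t_ge0 //.
apply: le_trans (trnorm_le _) _.
rewrite ler_sqrtC ?qualifE /= ?ler0n ?mulr_ge0 ?ler0n ?frob_ge0 //.
by rewrite ler_piMr ?ler0n ?frobY.
Qed.

Lemma decomp L :
  \sum_a \sum_b (F L (delta_mx a b)) a b = 1 + \sum_a \sum_b (F L (Y a b)) a b.
Proof.
have e a b : delta_mx a b = Y a b + ((a == b)%:R / d%:R) *: (1%:M : 'M[C]_d).
  by rewrite /Y subrK.
under eq_bigr do under eq_bigr do rewrite e FD FZ !mxE.
under eq_bigr do rewrite big_split /=.
rewrite big_split /= addrC; congr (_ + _).
set G := F L 1%:M.
transitivity (\sum_a d%:R^-1 * G a a).
  apply: eq_bigr => a _; rewrite (bigD1 a) //= big1 ?addr0; first by rewrite eqxx mul1r.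
  by move=> b nb; rewrite eq_sym (negbTE nb) mul0r mul0r.
by rewrite -mulr_sumr -/(\tr G) /G F_tr mxtrace1 mulVf // dn0.
Qed.

End Main.

Theorem mainTheorem16 (C : numClosedFieldType) (d : nat) (d_gt0 : (0 < d)%N)
  (E : {linear 'M[C]_d -> 'M[C]_d})
  (E_cp : completely_positive E) (E_tp : trace_preserving E)
  (L : nat) (L_ge1 : (1 <= L)%N) (t : C) (t_tau : is_ergodicity_coeff E t) :
  let c := (d%:R ^+ 2 * sqrtC d%:R : C) in
  1 - c * t ^+ L <= \tr (lin_mx E ^+ L) /\ \tr (lin_mx E ^+ L) <= 1 + c * t ^+ L.
Proof.
move=> c.
have T := tr_real E_cp L.
move: T; set Tr := \tr (lin_mx E ^+ L) => T.
have eq : Tr - 1 = \sum_a \sum_b (F E L (Y C a b)) a b.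
  by rewrite /Tr trace_formula (decomp d_gt0 E_tp); ring.
have bound : `|Tr - 1| <= c * t ^+ L.
  rewrite eq; apply: le_trans (ler_norm_sum _ _ _) _.
  apply: le_trans (_ : _ <= \sum_(a < d) \sum_(b < d) (t ^+ L * sqrtC d%:R)) _.
    apply: ler_sum => a _; apply: le_trans (ler_norm_sum _ _ _) _.
    by apply: ler_sum => b _; apply: (entry_bound d_gt0 E_tp t_tau).
  rewrite !sumr_const !card_ord -mulrnA -[X in X <= _]mulr_natl natrM /c.
  by rewrite le_eqVlt; apply/orP; left; apply/eqP; ring.
have re : Tr - 1 \is Num.real.
  by apply: rpredB; [rewrite CrealE T | exact: rpred1].
move: bound; rewrite real_ler_norml // => /andP [h1 h2].
split.
  rewrite -subr_ge0; rewrite -subr_ge0 in h1.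
  by have -> : Tr - (1 - c * t ^+ L) = Tr - 1 - - (c * t ^+ L) by ring.
rewrite -subr_ge0; rewrite -subr_ge0 in h2.
by have -> : 1 + c * t ^+ L - Tr = c * t ^+ L - (Tr - 1) by ring.
Qed.
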